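(* The category $\mathsf{XMod}(\mathsf{GpGd})$ of crossed modules over group-groupoids is equivalent to the category $\mathsf{XSq}(\mathsf{Gp})$ of crossed squares over groups.
   Context: A group-groupoid $G$ is a groupoid with set of arrows $G$ and set of objects $G_0$, source and target maps $d_0,d_1\colon G\to G_0$, identity map $\varepsilon\colon G_0\to G$, and composition $b\circ a$ defined when $d_1(a)=d_0(b)$, such that $G$ and $G_0$ are groups (written additively) and all groupoid structure maps are group homomorphisms. A morphism of group-groupoids is a functor that is a group homomorphism on arrows and objects. A derived action of a group-groupoid $H$ on a group-groupoid $G$ is an action $b\cdot a$ of the group of arrows $H$ on the group of arrows $G$ by automorphisms such that, for a suitable group structure on $G_0\times H_0$, the product groupoid $G\times H$ with addition $(a,b)+(a_1,b_1)=(a+b\cdot a_1,b+b_1)$ is a group-groupoid. A crossed module over group-groupoids is a triple $(G,H,\partial)$ with $G,H$ group-groupoids, a derived action of $H$ on $G$, and a morphism of group-groupoids $\partial=(\partial_1,\partial_0)\colon G\to H$ such that $\partial_1(b\cdot a)=b+\partial_1(a)-b$ and $\partial_1(a)\cdot a_1=a+a_1-a$ for all arrows $a,a_1\in G$, $b\in H$. Morphisms in $\mathsf{XMod}(\mathsf{GpGd})$ are pairs $(f,g)$ of group-groupoid morphisms $f\colon G\to G'$, $g\colon H\to H'$ with $g\partial=\partial'f$ and $f(b\cdot a)=g(b)\cdot f(a)$. A crossed square over groups consists of group homomorphisms $\lambda\colon L\to M$, $\lambda'\colon L\to N$, $\mu\colon M\to P$, $\nu\colon N\to P$ with $\nu\lambda'=\mu\lambda$,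 left actions of $P$ on $L,M,N$ by automorphisms (whence $M$ acts on $L$ and $N$ via $\mu$, and $N$ acts on $L$ and $M$ via $\nu$), and a function $h\colon M\times N\to L$, such that for all $l\in L$, $m,m'\in M$, $n,n'\in N$, $p\in P$: (CS1) $\lambda,\lambda'$ are $P$-equivariant and $\mu$, $\nu$, $\mu\lambda$ are crossed modules of groups; (CS2) $\lambda h(m,n)=m+n\cdot(-m)$ and $\lambda' h(m,n)=m\cdot n-n$; (CS3) $h(\lambda(l),n)=l+n\cdot(-l)$ and $h(m,\lambda'(l))=m\cdot l-l$; (CS4) $h(m+m',n)=m\cdot h(m',n)+h(m,n)$ and $h(m,n+n')=h(m,n)+n\cdot h(m,n')$; (CS5) $h(p\cdot m,p\cdot n)=p\cdot h(m,n)$. A morphism of crossed squares is a quadruple of group homomorphisms $f_L,f_M,f_N,f_P$ commuting with the four maps of the squares, equivariant with respect to all the actions, and satisfying $f_L(h_1(m,n))=h_2(f_M(m),f_N(n))$. $\mathsf{XSq}(\mathsf{Gp})$ denotes the resulting category. *)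

(* Defs.v *)
From Stdlib Require Import Utf8.
Set Implicit Arguments.
Unset Strict Implicit.

(** * Groups (written additively, not necessarily abelian) *)

Record IsGroup (T : Type) (add : T -> T -> T) (zero : T) (neg : T -> T) : Prop := {
  g_assoc : forall x y z, add x (add y z) = add (add x y) z;
  g_zero_l : forall x, add zero x = x;
  g_zero_r : forall x, add x zero = x;
  g_neg_l : forall x, add (neg x) x = zero;
  g_neg_r : forall x, add x (neg x) = zero }.

Record Group := {
  carrier :> Type;
  gadd : carrier -> carrier -> carrier;
  gzero : carrier;
  gneg : carrier -> carrier;
  gax : IsGroup gadd gzero gneg }.
Arguments gadd {g} _ _.
Arguments gzero {g}.
Arguments gneg {g} _.

Definition IsHom (A B : Type) (addA : A -> A -> A) (addB : B -> B -> B) (f : A -> B) : Prop :=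
  forall x y, f (addA x y) = addB (f x) (f y).

Definition GpHom (G H : Group) (f : G -> H) : Prop := IsHom (@gadd G) (@gadd H) f.

Record IsAction (P X : Group) (act : P -> X -> X) : Prop := {
  act_zero : forall x, act gzero x = x;
  act_add : forall p q x, act (gadd p q) x = act p (act q x);
  act_hom : forall p x y, act p (gadd x y) = gadd (act p x) (act p y) }.

Record IsXModGp (X P : Group) (d : X -> P) (act : P -> X -> X) : Prop := {
  xmg_act : IsAction act;
  xmg_hom : GpHom d;
  xmg_equiv : forall p x, d (act p x) = gadd (gadd p (d x)) (gneg p);
  xmg_peiffer : forall x x', act (d x) x' = gadd (gadd x x') (gneg x) }.

(** * Group-groupoids *)

(** Groupoid with arrows [A], objects [O], source [s] (= d0), target [t] (= d1),
    identities [e] (= epsilon) and composition [c b a] = "b o a", defined (i.e.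
    constrained) only when [t a = s b]; together with the requirement that
    all structure maps are homomorphisms for the given group laws. *)
Record IsGpGd (A O : Type) (addA : A -> A -> A) (addO : O -> O -> O)
    (s t : A -> O) (e : O -> A) (c : A -> A -> A) : Prop := {
  gg_s_id : forall x, s (e x) = x;
  gg_t_id : forall x, t (e x) = x;
  gg_s_comp : forall a b, t a = s b -> s (c b a) = s a;
  gg_t_comp : forall a b, t a = s b -> t (c b a) = t b;
  gg_id_l : forall a, c (e (t a)) a = a;
  gg_id_r : forall a, c a (e (s a)) = a;
  gg_assoc : forall a b d, t a = s b -> t b = s d -> c d (c b a) = c (c d b) a;
  gg_inv : forall a, exists a', s a' = t a /\ t a' = s a /\
             c a' a = e (s a) /\ c a a' = e (t a);
  gg_s_hom : IsHom addA addO s;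
  gg_t_hom : IsHom addA addO t;
  gg_e_hom : IsHom addO addA e;
  gg_c_hom : forall a b a1 b1, t a = s b -> t a1 = s b1 ->
      c (addA b b1) (addA a a1) = addA (c b a) (c b1 a1) }.

Record GpGd := {
  arr : Group;
  obj : Group;
  src : arr -> obj;
  tgt : arr -> obj;
  idn : obj -> arr;
  comp : arr -> arr -> arr;
  gpgd_ax : IsGpGd (@gadd arr) (@gadd obj) src tgt idn comp }.
Arguments src : clear implicits.
Arguments tgt : clear implicits.
Arguments idn : clear implicits.
Arguments comp : clear implicits.

Record IsGpGdMor (G H : GpGd) (f1 : arr G -> arr H) (f0 : obj G -> obj H) : Prop := {
  gm_hom1 : GpHom f1;
  gm_hom0 : GpHom f0;
  gm_src : forall a, src H (f1 a) = f0 (src G a);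
  gm_tgt : forall a, tgt H (f1 a) = f0 (tgt G a);
  gm_idn : forall x, f1 (idn G x) = idn H (f0 x);
  gm_comp : forall a b, tgt G a = src G b -> f1 (comp G b a) = comp H (f1 b) (f1 a) }.

Section Derived.
Variables (G H : GpGd) (act : arr H -> arr G -> arr G).

Definition sd_add (u v : arr G * arr H) : arr G * arr H :=
  (gadd (fst u) (act (snd u) (fst v)), gadd (snd u) (snd v)).
Definition sd_zero : arr G * arr H := (gzero, gzero).
Definition sd_neg (u : arr G * arr H) : arr G * arr H :=
  (act (gneg (snd u)) (gneg (fst u)), gneg (snd u)).

Definition prod_src (u : arr G * arr H) : obj G * obj H := (src G (fst u), src H (snd u)).
Definition prod_tgt (u : arr G * arr H) : obj G * obj H := (tgt G (fst u), tgt H (snd u)).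
Definition prod_idn (x : obj G * obj H) : arr G * arr H := (idn G (fst x), idn H (snd x)).
Definition prod_comp (v u : arr G * arr H) : arr G * arr H :=
  (comp G (fst v) (fst u), comp H (snd v) (snd u)).
End Derived.

Definition IsDerivedAction (G H : GpGd) (act : arr H -> arr G -> arr G) : Prop :=
  IsAction act /\
  exists (addO : obj G * obj H -> obj G * obj H -> obj G * obj H)
         (zeroO : obj G * obj H) (negO : obj G * obj H -> obj G * obj H),
    IsGroup addO zeroO negO /\
    IsGroup (sd_add act) (sd_zero G H) (sd_neg act) /\
    IsGpGd (sd_add act) addO (@prod_src G H) (@prod_tgt G H)
           (@prod_idn G H) (@prod_comp G H).

(** * Crossed modules over group-groupoids *)

Record XModGG := {
  xG : GpGd;
  xH : GpGd;
  xact : arr xH -> arr xG -> arr xG;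
  xact_ax : IsDerivedAction xact;
  xd1 : arr xG -> arr xH;
  xd0 : obj xG -> obj xH;
  xd_mor : IsGpGdMor xd1 xd0;
  xd_equiv : forall (b : arr xH) (a : arr xG),
      xd1 (xact b a) = gadd (gadd b (xd1 a)) (gneg b);
  xd_peiffer : forall a a1 : arr xG,
      xact (xd1 a) a1 = gadd (gadd a a1) (gneg a) }.
Arguments xact : clear implicits.
Arguments xd1 : clear implicits.
Arguments xd0 : clear implicits.

Record XModMor (X Y : XModGG) := {
  mf1 : arr (xG X) -> arr (xG Y);
  mf0 : obj (xG X) -> obj (xG Y);
  mg1 : arr (xH X) -> arr (xH Y);
  mg0 : obj (xH X) -> obj (xH Y);
  mf_mor : IsGpGdMor mf1 mf0;
  mg_mor : IsGpGdMor mg1 mg0;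
  m_d1 : forall a, mg1 (xd1 X a) = xd1 Y (mf1 a);
  m_d0 : forall x, mg0 (xd0 X x) = xd0 Y (mf0 x);
  m_act : forall b a, mf1 (xact X b a) = xact Y (mg1 b) (mf1 a) }.

(** * Crossed squares over groups *)

Record IsXSq (L M N P : Group) (lam : L -> M) (lam' : L -> N) (mu : M -> P) (nu : N -> P)
    (actL : P -> L -> L) (actM : P -> M -> M) (actN : P -> N -> N) (h : M -> N -> L) : Prop := {
  sq_hom_lam : GpHom lam;
  sq_hom_lam' : GpHom lam';
  sq_hom_mu : GpHom mu;
  sq_hom_nu : GpHom nu;
  sq_comm : forall l, nu (lam' l) = mu (lam l);
  sq_actL : IsAction actL;
  sq_actM : IsAction actM;
  sq_actN : IsAction actN;
  cs1_lam : forall p l, lam (actL p l) = actM p (lam l);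
  cs1_lam' : forall p l, lam' (actL p l) = actN p (lam' l);
  cs1_mu : IsXModGp mu actM;
  cs1_nu : IsXModGp nu actN;
  cs1_mulam : IsXModGp (fun l => mu (lam l)) actL;
  (* CS2 ; M acts via mu, N acts via nu *)
  cs2_l : forall m n, lam (h m n) = gadd m (actM (nu n) (gneg m));
  cs2_r : forall m n, lam' (h m n) = gadd (actN (mu m) n) (gneg n);
  cs3_l : forall l n, h (lam l) n = gadd l (actL (nu n) (gneg l));
  cs3_r : forall m l, h m (lam' l) = gadd (actL (mu m) l) (gneg l);
  cs4_l : forall m m' n, h (gadd m m') n = gadd (actL (mu m) (h m' n)) (h m n);
  cs4_r : forall m n n', h m (gadd n n') = gadd (h m n) (actL (nu n) (h m n'));
  cs5 : forall p m n, h (actM p m) (actN p n) = actL p (h m n) }.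

Record XSq := {
  sqL : Group; sqM : Group; sqN : Group; sqP : Group;
  sq_lam : sqL -> sqM;
  sq_lam' : sqL -> sqN;
  sq_mu : sqM -> sqP;
  sq_nu : sqN -> sqP;
  sq_aL : sqP -> sqL -> sqL;
  sq_aM : sqP -> sqM -> sqM;
  sq_aN : sqP -> sqN -> sqN;
  sq_h : sqM -> sqN -> sqL;
  sq_ax : IsXSq sq_lam sq_lam' sq_mu sq_nu sq_aL sq_aM sq_aN sq_h }.
Arguments sq_lam : clear implicits.
Arguments sq_lam' : clear implicits.
Arguments sq_mu : clear implicits.
Arguments sq_nu : clear implicits.
Arguments sq_aL : clear implicits.
Arguments sq_aM : clear implicits.
Arguments sq_aN : clear implicits.
Arguments sq_h : clear implicits.

Record XSqMor (S T : XSq) := {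
  fL : sqL S -> sqL T;
  fM : sqM S -> sqM T;
  fN : sqN S -> sqN T;
  fP : sqP S -> sqP T;
  fL_hom : GpHom fL;
  fM_hom : GpHom fM;
  fN_hom : GpHom fN;
  fP_hom : GpHom fP;
  f_lam : forall l, fM (sq_lam S l) = sq_lam T (fL l);
  f_lam' : forall l, fN (sq_lam' S l) = sq_lam' T (fL l);
  f_mu : forall m, fP (sq_mu S m) = sq_mu T (fM m);
  f_nu : forall n, fP (sq_nu S n) = sq_nu T (fN n);
  f_aL : forall p l, fL (sq_aL S p l) = sq_aL T (fP p) (fL l);
  f_aM : forall p m, fM (sq_aM S p m) = sq_aM T (fP p) (fM m);
  f_aN : forall p n, fN (sq_aN S p n) = sq_aN T (fP p) (fN n);
  f_h : forall m n, fL (sq_h S m n) = sq_h T (fM m) (fN n) }.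

Lemma IsGpGdMor_id (G : GpGd) : IsGpGdMor (G:=G) (H:=G) (fun a => a) (fun x => x).
Proof. split; unfold GpHom, IsHom; auto. Qed.

Lemma IsGpGdMor_comp (G H K : GpGd) f1 f0 g1 g0 :
  IsGpGdMor (G:=G) (H:=H) f1 f0 -> IsGpGdMor (G:=H) (H:=K) g1 g0 ->
  IsGpGdMor (G:=G) (H:=K) (fun a => g1 (f1 a)) (fun x => g0 (f0 x)).
Proof.
  intros [h1 h0 s t e c] [h1' h0' s' t' e' c'].
  split; unfold GpHom, IsHom in *; intros.
  - rewrite h1, h1'; reflexivity.
  - rewrite h0, h0'; reflexivity.
  - rewrite s', s; reflexivity.
  - rewrite t', t; reflexivity.
  - rewrite e, e'; reflexivity.
  - rewrite c by assumption. apply c'. rewrite t, s, H0. reflexivity.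
Qed.

Definition XModMor_id (X : XModGG) : XModMor X X.
Proof.
  refine {| mf1 := fun a => a; mf0 := fun x => x; mg1 := fun a => a; mg0 := fun x => x;
            mf_mor := IsGpGdMor_id _; mg_mor := IsGpGdMor_id _ |}; reflexivity.
Defined.

Definition XModMor_comp (X Y Z : XModGG) (g : XModMor Y Z) (f : XModMor X Y) : XModMor X Z.
Proof.
  refine {| mf1 := fun a => mf1 g (mf1 f a); mf0 := fun x => mf0 g (mf0 f x);
            mg1 := fun a => mg1 g (mg1 f a); mg0 := fun x => mg0 g (mg0 f x);
            mf_mor := IsGpGdMor_comp (mf_mor f) (mf_mor g);
            mg_mor := IsGpGdMor_comp (mg_mor f) (mg_mor g) |}; intros.
  - rewrite m_d1, m_d1; reflexivity.
  - rewrite m_d0, m_d0; reflexivity.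
  - rewrite m_act, m_act; reflexivity.
Defined.

Definition XModMor_eq (X Y : XModGG) (f g : XModMor X Y) : Prop :=
  (forall a, mf1 f a = mf1 g a) /\ (forall x, mf0 f x = mf0 g x) /\
  (forall b, mg1 f b = mg1 g b) /\ (forall y, mg0 f y = mg0 g y).

Definition XSqMor_id (S : XSq) : XSqMor S S.
Proof.
  refine {| fL := fun x => x; fM := fun x => x; fN := fun x => x; fP := fun x => x |};
  unfold GpHom, IsHom; reflexivity.
Defined.

Definition XSqMor_comp (S T U : XSq) (g : XSqMor T U) (f : XSqMor S T) : XSqMor S U.
Proof.
  refine {| fL := fun x => fL g (fL f x); fM := fun x => fM g (fM f x);
            fN := fun x => fN g (fN f x); fP := fun x => fP g (fP f x) |};
  unfold GpHom, IsHom; intros;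
  first [ rewrite fL_hom, fL_hom | rewrite fM_hom, fM_hom | rewrite fN_hom, fN_hom
        | rewrite fP_hom, fP_hom | rewrite f_lam, f_lam | rewrite f_lam', f_lam'
        | rewrite f_mu, f_mu | rewrite f_nu, f_nu | rewrite f_aL, f_aL
        | rewrite f_aM, f_aM | rewrite f_aN, f_aN | rewrite f_h, f_h ]; reflexivity.
Defined.

Definition XSqMor_eq (S T : XSq) (f g : XSqMor S T) : Prop :=
  (forall x, fL f x = fL g x) /\ (forall x, fM f x = fM g x) /\
  (forall x, fN f x = fN g x) /\ (forall x, fP f x = fP g x).

(** A category presented by objects, hom-types, an equality of morphisms
    (here: equality of all underlying maps), identities and composition. *)
Record Cat := {
  cObj : Type;
  cHom : cObj -> cObj -> Type;
  cEq : forall X Y, cHom X Y -> cHom X Y -> Prop;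
  cId : forall X, cHom X X;
  cComp : forall X Y Z, cHom Y Z -> cHom X Y -> cHom X Z }.
Arguments cHom : clear implicits.
Arguments cEq {c X Y} _ _.
Arguments cId {c} X.
Arguments cComp {c X Y Z} _ _.

Record Functor (C D : Cat) := {
  fobj : cObj C -> cObj D;
  fmap : forall X Y, cHom C X Y -> cHom D (fobj X) (fobj Y);
  fmap_eq : forall X Y (f g : cHom C X Y), cEq f g -> cEq (fmap f) (fmap g);
  fmap_id : forall X, cEq (fmap (cId X)) (cId (fobj X));
  fmap_comp : forall X Y Z (g : cHom C Y Z) (f : cHom C X Y),
      cEq (fmap (cComp g f)) (cComp (fmap g) (fmap f)) }.
Arguments fobj {C D} _ _.
Arguments fmap {C D} _ {X Y} _.

Definition CatEquivalence (C D : Cat) : Prop :=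
  exists (F : Functor C D) (G : Functor D C),
    (exists (eta : forall X, cHom C X (fobj G (fobj F X)))
            (eta' : forall X, cHom C (fobj G (fobj F X)) X),
        (forall X, cEq (cComp (eta' X) (eta X)) (cId X)) /\
        (forall X, cEq (cComp (eta X) (eta' X)) (cId _)) /\
        (forall X Y (f : cHom C X Y),
            cEq (cComp (fmap G (fmap F f)) (eta X)) (cComp (eta Y) f))) /\
    (exists (eps : forall Y, cHom D (fobj F (fobj G Y)) Y)
            (eps' : forall Y, cHom D Y (fobj F (fobj G Y))),
        (forall Y, cEq (cComp (eps' Y) (eps Y)) (cId _)) /\
        (forall Y, cEq (cComp (eps Y) (eps' Y)) (cId Y)) /\
        (forall X Y (g : cHom D X Y),
            cEq (cComp g (eps X)) (cComp (eps Y) (fmap F (fmap G g))))).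

Definition XMod_GpGd : Cat :=
  {| cObj := XModGG; cHom := XModMor; cEq := XModMor_eq;
     cId := XModMor_id; cComp := XModMor_comp |}.

Definition XSq_Gp : Cat :=
  {| cObj := XSq; cHom := XSqMor; cEq := XSqMor_eq;
     cId := XSqMor_id; cComp := XSqMor_comp |}.

(* Main.v *)
Require Import Defs.
From Stdlib Require Import Utf8 ProofIrrelevance.
Set Implicit Arguments.
Unset Strict Implicit.


Declare Scope g_scope.
Delimit Scope g_scope with g.
Notation "x + y" := (gadd x y) : g_scope.
Notation "- x" := (gneg x) : g_scope.
Notation "x - y" := (gadd x (gneg y)) : g_scope.
Open Scope g_scope.

Section GroupLemmas.
Variable G : Group.
Implicit Types x y z : G.
Lemma gAr x y z : x + y + z = x + (y + z).
Proof. symmetry; apply (g_assoc (gax G)). Qed.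
Lemma gA x y z : x + (y + z) = x + y + z.
Proof. apply (g_assoc (gax G)). Qed.
Lemma g0l x : gzero + x = x. Proof. apply (g_zero_l (gax G)). Qed.
Lemma g0r x : x + gzero = x. Proof. apply (g_zero_r (gax G)). Qed.
Lemma gNl x : - x + x = gzero. Proof. apply (g_neg_l (gax G)). Qed.
Lemma gNr x : x + - x = gzero. Proof. apply (g_neg_r (gax G)). Qed.
Lemma gNK x y : - x + (x + y) = y.
Proof. rewrite gA, gNl, g0l; reflexivity. Qed.
Lemma gKN x y : x + (- x + y) = y.
Proof. rewrite gA, gNr, g0l; reflexivity. Qed.
Lemma gaddI x y z : x + y = x + z -> y = z.
Proof. intro H. rewrite <- (gNK x y), H, gNK; reflexivity. Qed.
Lemma gaddIr x y z : y + x = z + x -> y = z.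
Proof. intro H. rewrite <- (g0r y), <- (gNr x), gA, H, <- gA, gNr, g0r; reflexivity. Qed.
Lemma gNuniq x y : x + y = gzero -> y = - x.
Proof. intro H. apply (gaddI (x:=x)). rewrite H, gNr; reflexivity. Qed.
Lemma gNN x : - - x = x.
Proof. symmetry. apply gNuniq. apply gNl. Qed.
Lemma gNadd x y : - (x + y) = - y + - x.
Proof. symmetry. apply gNuniq. rewrite gAr, gKN, gNr; reflexivity. Qed.
Lemma gN0 : - (gzero : G) = gzero.
Proof. symmetry. apply gNuniq. apply g0l. Qed.
Lemma gmove_l x y z : x + y = z -> y = - x + z.
Proof. intro H; rewrite <- H, gNK; reflexivity. Qed.
Lemma gmove_r x y z : x + y = z -> x = z - y.
Proof. intro H; rewrite <- H, gAr, gNr, g0r; reflexivity. Qed.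
End GroupLemmas.

Ltac gsimpl := repeat progress (rewrite ?gAr, ?g0l, ?g0r, ?gNN, ?gNadd, ?gN0, ?gNK, ?gKN, ?gNr, ?gNl).
Ltac gsimplH H := repeat progress (rewrite ?gAr, ?g0l, ?g0r, ?gNN, ?gNadd, ?gN0, ?gNK, ?gKN, ?gNr, ?gNl in H).

Section HomLemmas.
Variables (G H : Group) (f : G -> H) (hf : GpHom f).
Lemma hom0 : f gzero = gzero.
Proof. apply (gaddI (x:=f gzero)). rewrite <- hf, !g0r; reflexivity. Qed.
Lemma homN x : f (- x) = - f x.
Proof. apply gNuniq. rewrite <- hf, gNr. apply hom0. Qed.
Lemma homD x y : f (x + y) = f x + f y. Proof. apply hf. Qed.
End HomLemmas.

Section ActLemmas.
Variables (P X : Group) (act : P -> X -> X) (ha : IsAction act).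
Lemma act0 p : act p gzero = gzero.
Proof. apply (gaddI (x:=act p gzero)). rewrite <- (act_hom ha), !g0r; reflexivity. Qed.
Lemma actN p x : act p (- x) = - act p x.
Proof. apply gNuniq. rewrite <- (act_hom ha), gNr. apply act0. Qed.
Lemma actD p x y : act p (x + y) = act p x + act p y. Proof. apply (act_hom ha). Qed.
Lemma actA p q x : act p (act q x) = act (p + q) x. Proof. symmetry; apply (act_add ha). Qed.
Lemma act_z x : act gzero x = x. Proof. apply (act_zero ha). Qed.
Lemma actNK p x : act (- p) (act p x) = x.
Proof. rewrite actA, gNl; apply act_z. Qed.
Lemma actKN p x : act p (act (- p) x) = x.
Proof. rewrite actA, gNr; apply act_z. Qed.
End ActLemmas.

Section Kernel.
Variables (G H : Group) (f : G -> H) (hf : GpHom f).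
Definition Ker := { x : G | f x = gzero }.
Lemma ker_add_pf (x y : Ker) : f (proj1_sig x + proj1_sig y) = gzero.
Proof. rewrite hf, (proj2_sig x), (proj2_sig y). apply g0l. Qed.
Lemma ker_zero_pf : f gzero = gzero. Proof. apply hom0; exact hf. Qed.
Lemma ker_neg_pf (x : Ker) : f (- proj1_sig x) = gzero.
Proof. rewrite (homN hf), (proj2_sig x). apply gN0. Qed.
Definition kadd (x y : Ker) : Ker := exist _ _ (ker_add_pf x y).
Definition kzero : Ker := exist _ _ ker_zero_pf.
Definition kneg (x : Ker) : Ker := exist _ _ (ker_neg_pf x).
Lemma sig_ext (x y : Ker) : proj1_sig x = proj1_sig y -> x = y.
Proof. destruct x, y; simpl; intros ->. f_equal. apply proof_irrelevance. Qed.
Lemma ker_group : IsGroup kadd kzero kneg.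
Proof.
  split; intros; apply sig_ext; simpl.
  apply gA. apply g0l. apply g0r. apply gNl. apply gNr.
Qed.
Definition KerG : Group := {| carrier := Ker; gadd := kadd; gzero := kzero; gneg := kneg; gax := ker_group |}.
End Kernel.

Lemma sig_eq {A} {P : A -> Prop} (x y : {a | P a}) : proj1_sig x = proj1_sig y -> x = y.
Proof. destruct x, y; simpl; intros ->. f_equal. apply proof_irrelevance. Qed.

Section SD.
Variables (X P : Group) (act : P -> X -> X) (ha : IsAction act).
Definition sdadd (u v : X * P) : X * P := (fst u + act (snd u) (fst v), snd u + snd v).
Definition sdzero : X * P := (gzero, gzero).
Definition sdneg (u : X * P) : X * P := (act (- snd u) (- fst u), - snd u).
Lemma sd_group : IsGroup sdadd sdzero sdneg.
Proof.
  split; intros; unfold sdadd, sdzero, sdneg; destruct x; simpl; try destruct y; try destruct z; simpl; f_equal;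
    rewrite ?(actD ha), ?(actA ha), ?(act0 ha), ?(act_z ha); gsimpl; try reflexivity.
  all: rewrite ?(actN ha); gsimpl; rewrite ?(act_z ha); gsimpl; reflexivity.
Qed.
Definition SDG : Group := {| carrier := X * P; gadd := sdadd; gzero := sdzero; gneg := sdneg; gax := sd_group |}.
End SD.

Open Scope g_scope.

Section GGFacts.
Variable G : GpGd.
Let ax := gpgd_ax G.
Notation s := (src G). Notation t := (tgt G). Notation e := (idn G). Notation c := (comp G).
Lemma s_hom : GpHom s. Proof. exact (gg_s_hom ax). Qed.
Lemma t_hom : GpHom t. Proof. exact (gg_t_hom ax). Qed.
Lemma e_hom : GpHom e. Proof. exact (gg_e_hom ax). Qed.
Lemma se x : s (e x) = x. Proof. apply (gg_s_id ax). Qed.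
Lemma te x : t (e x) = x. Proof. apply (gg_t_id ax). Qed.
Lemma s0 : s gzero = gzero. Proof. apply hom0, s_hom. Qed.
Lemma t0 : t gzero = gzero. Proof. apply hom0, t_hom. Qed.
Lemma e0 : e gzero = gzero. Proof. apply hom0, e_hom. Qed.
Lemma sN x : s (- x) = - s x. Proof. apply homN, s_hom. Qed.
Lemma tN x : t (- x) = - t x. Proof. apply homN, t_hom. Qed.
Lemma eN x : e (- x) = - e x. Proof. apply homN, e_hom. Qed.
Lemma sD x y : s (x + y) = s x + s y. Proof. apply s_hom. Qed.
Lemma tD x y : t (x + y) = t x + t y. Proof. apply t_hom. Qed.
Lemma eD x y : e (x + y) = e x + e y. Proof. apply e_hom. Qed.
Lemma e_inj x y : e x = e y -> x = y.
Proof. intro H. rewrite <- (se x), <- (se y), H. reflexivity. Qed.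
Lemma c0l x : t x = gzero -> c gzero x = x.
Proof. intro H. rewrite <- e0, <- H. apply (gg_id_l ax). Qed.
Lemma c0r x : s x = gzero -> c x gzero = x.
Proof. intro H. rewrite <- e0, <- H. apply (gg_id_r ax). Qed.
Lemma comp_formula a b : t a = s b -> c b a = b - e (s b) + a.
Proof.
  intro H.
  assert (E : c (b + gzero) (e (t a) + (- e (t a) + a)) =
              c b (e (t a)) + c gzero (- e (t a) + a)).
  { apply (gg_c_hom ax). rewrite te; exact H. rewrite tD, tN, te, gNl, s0. reflexivity. }
  rewrite g0r, gKN in E. rewrite E. rewrite H, (gg_id_r ax), c0l. gsimpl. reflexivity.
  rewrite tD, tN, te, H, gNl. reflexivity.
Qed.
Lemma ker_comm k l : s k = gzero -> t l = gzero -> k + l = l + k.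
Proof.
  intros Hk Hl.
  assert (E1 : c (k + gzero) (gzero + l) = c k gzero + c gzero l).
  { apply (gg_c_hom ax). rewrite t0, Hk; reflexivity. rewrite Hl, s0; reflexivity. }
  assert (E2 : c (gzero + k) (l + gzero) = c gzero l + c k gzero).
  { apply (gg_c_hom ax). rewrite Hl, s0; reflexivity. rewrite t0, Hk; reflexivity. }
  rewrite g0r, g0l in E1, E2. rewrite E1 in E2. rewrite c0r in E2 by exact Hk.
  rewrite c0l in E2 by exact Hl. exact E2.
Qed.
Lemma ker_peiffer k k' : s k = gzero -> s k' = gzero ->
  e (t k) + k' - e (t k) = k + k' - k.
Proof.
  intros Hk Hk'.
  assert (E := ker_comm (k:=k') (l:= - k + e (t k)) Hk').
  rewrite tD, tN, te, gNl in E. specialize (E eq_refl).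
  apply (gaddI (x:= - k)). gsimpl. rewrite gA, gA, <- E. gsimpl. reflexivity.
Qed.
End GGFacts.

Section XGG.
Variables (X P : Group) (d : X -> P) (act : P -> X -> X) (hx : IsXModGp d act).
Let ha := xmg_act hx.
Let hd := xmg_hom hx.
Definition xg_src (u : SDG ha) : P := snd u.
Definition xg_tgt (u : SDG ha) : P := d (fst u) + snd u.
Definition xg_idn (p : P) : SDG ha := (gzero, p).
Definition xg_comp (v u : SDG ha) : SDG ha := (fst v + fst u, snd u).
Lemma xg_ax : IsGpGd (@gadd (SDG ha)) (@gadd P) xg_src xg_tgt xg_idn xg_comp.
Proof.
  unfold xg_src, xg_tgt, xg_idn, xg_comp.
  split; simpl; intros; unfold sdadd; simpl.
  - reflexivity.
  - rewrite (hom0 hd); apply g0l.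
  - reflexivity.
  - rewrite <- H, hd; gsimpl; reflexivity.
  - destruct a; simpl; rewrite g0l; reflexivity.
  - destruct a; simpl; rewrite g0r; reflexivity.
  - rewrite gA; reflexivity.
  - destruct a as [x p]; simpl.
    exists (- x, d x + p); simpl. rewrite (homN hd). gsimpl.
    repeat split; f_equal; gsimpl; reflexivity.
  - intros u v; reflexivity.
  - intros u v; destruct u as [x p], v as [y q]; simpl.
    rewrite hd, (xmg_equiv hx). gsimpl. reflexivity.
  - intros x y; simpl; rewrite (act0 ha), g0l; reflexivity.
  - destruct a as [x p], b as [y q], a1 as [x1 p1], b1 as [y1 q1]; simpl in *.
    f_equal. subst. rewrite (act_add ha), (xmg_peiffer hx), (actD ha). gsimpl. reflexivity.
Qed.
Definition XGG : GpGd := {| arr := SDG ha; obj := P; src := xg_src; tgt := xg_tgt;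
  idn := xg_idn; comp := xg_comp; gpgd_ax := xg_ax |}.
End XGG.

Open Scope g_scope.

Section XFacts.
Variable X : XModGG.
Notation G := (xG X). Notation H := (xH X).
Notation act := (xact X). Notation d1 := (xd1 X). Notation d0 := (xd0 X).
Notation s := (src G). Notation t := (tgt G). Notation e := (idn G). Notation c := (comp G).
Notation s' := (src H). Notation t' := (tgt H). Notation e' := (idn H). Notation c' := (comp H).

Lemma xa : IsAction act. Proof. exact (proj1 (xact_ax X)). Qed.
Definition oa (y : obj H) (x : obj G) : obj G := s (act (e' y) (e x)).

Lemma prodGG : exists addO, IsGpGd (sd_add act) addO (@prod_src G H) (@prod_tgt G H)
           (@prod_idn G H) (@prod_comp G H).
Proof. destruct (xact_ax X) as [_ [addO [zO [nO [_ [_ Hp]]]]]]. exists addO; exact Hp. Qed.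

Lemma oa_src b a : s (act b a) = oa (s' b) (s a).
Proof.
  destruct prodGG as [addO Hp].
  assert (E1 := gg_s_hom Hp (gzero, b) (a, gzero)).
  assert (E2 := gg_s_hom Hp (gzero, e' (s' b)) (e (s a), gzero)).
  unfold prod_src, sd_add in E1, E2; simpl in E1, E2.
  rewrite !se in E2. rewrite <- E2 in E1. injection E1; intros _ E.
  rewrite !g0l in E. exact E.
Qed.

Lemma oa_idn y x : e (oa y x) = act (e' y) (e x).
Proof.
  destruct prodGG as [addO Hp].
  assert (E := gg_s_hom Hp (e gzero, e' y) (e x, e' gzero)).
  assert (F := gg_e_hom Hp (gzero, y) (x, gzero)).
  unfold prod_src, prod_idn, sd_add in E, F; simpl in E, F.
  rewrite !se in E. rewrite <- E in F. simpl in F. injection F; intros _ F'.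
  rewrite e0, !g0l in F'. exact F'.
Qed.

Lemma oa_tgt b a : t (act b a) = oa (t' b) (t a).
Proof.
  destruct prodGG as [addO Hp].
  assert (E1 := gg_t_hom Hp (gzero, b) (a, gzero)).
  assert (E2 := gg_t_hom Hp (gzero, e' (t' b)) (e (t a), gzero)).
  unfold prod_tgt, sd_add in E1, E2; simpl in E1, E2.
  rewrite !te in E2. rewrite <- E2 in E1. injection E1; intros _ E.
  rewrite !g0l in E. rewrite E, <- oa_idn, te. reflexivity.
Qed.

Lemma interchange a1 a2 b1 b2 : t a1 = s a2 -> t' b1 = s' b2 ->
  c (act b2 a2) (act b1 a1) = act (c' b2 b1) (c a2 a1).
Proof.
  intros Ha Hb. destruct prodGG as [addO Hp].
  assert (E := @gg_c_hom _ _ _ _ _ _ _ _ Hp (gzero, b1) (gzero, b2) (a1, gzero) (a2, gzero)).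
  unfold prod_src, prod_tgt, prod_comp, sd_add in E; simpl in E.
  rewrite t0, s0, t0, s0, Hb, Ha in E. specialize (E eq_refl eq_refl).
  injection E; intros _ E'. rewrite !g0l in E'. rewrite E'.
  rewrite c0l by apply t0. apply g0l.
Qed.

Lemma oa_0 y : oa y gzero = gzero.
Proof. unfold oa. rewrite e0, (act0 xa). apply s0. Qed.
Lemma oa_z x : oa gzero x = x.
Proof. unfold oa. rewrite e0, (act_z xa). apply se. Qed.

Lemma act_ker_s b x : s x = gzero -> act b x = act (e' (t' b)) x.
Proof.
  intro Hx.
  assert (E := interchange (a1 := gzero) (a2 := x) (b1 := b) (b2 := e' (t' b))).
  rewrite t0, Hx, se in E. specialize (E eq_refl eq_refl).
  rewrite (act0 xa), (gg_id_l (gpgd_ax H)), (@c0r _ x Hx) in E.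
  rewrite c0r in E. symmetry; exact E.
  rewrite oa_src, Hx. apply oa_0.
Qed.

Lemma act_ker_t b x : t x = gzero -> act b x = act (e' (s' b)) x.
Proof.
  intro Hx.
  assert (E := interchange (a1 := x) (a2 := gzero) (b1 := e' (s' b)) (b2 := b)).
  rewrite s0, Hx, te in E. specialize (E eq_refl eq_refl).
  rewrite (act0 xa), (gg_id_r (gpgd_ax H)), (@c0l _ x Hx) in E.
  rewrite c0l in E. symmetry; exact E.
  rewrite oa_tgt, Hx. apply oa_0.
Qed.

Lemma dm : IsGpGdMor d1 d0. Proof. exact (xd_mor X). Qed.
Lemma d1D a b : d1 (a + b) = d1 a + d1 b. Proof. apply (gm_hom1 dm). Qed.
Lemma d0D a b : d0 (a + b) = d0 a + d0 b. Proof. apply (gm_hom0 dm). Qed.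
Lemma d1_0 : d1 gzero = gzero. Proof. apply hom0, (gm_hom1 dm). Qed.
Lemma d0_0 : d0 gzero = gzero. Proof. apply hom0, (gm_hom0 dm). Qed.
Lemma d1N a : d1 (- a) = - d1 a. Proof. apply homN, (gm_hom1 dm). Qed.
Lemma d0N a : d0 (- a) = - d0 a. Proof. apply homN, (gm_hom0 dm). Qed.
Lemma d1e x : d1 (e x) = e' (d0 x). Proof. apply (gm_idn dm). Qed.
Lemma d1s a : s' (d1 a) = d0 (s a). Proof. apply (gm_src dm). Qed.
Lemma d1t a : t' (d1 a) = d0 (t a). Proof. apply (gm_tgt dm). Qed.

Lemma act_e_d0 m x : act (e' (d0 m)) x = e m + x - e m.
Proof. rewrite <- d1e. apply (@xd_peiffer X). Qed.
End XFacts.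

Open Scope g_scope.

Section ToSq.
Variable X : XModGG.
Notation G := (xG X). Notation H := (xH X).
Notation act := (xact X). Notation d1 := (xd1 X). Notation d0 := (xd0 X).
Notation s := (src G). Notation t := (tgt G). Notation e := (idn G). Notation c := (comp G).
Notation s' := (src H). Notation t' := (tgt H). Notation e' := (idn H). Notation c' := (comp H).

Definition FL : Group := KerG (s_hom (G:=G)).
Definition FM : Group := obj G.
Definition FN : Group := KerG (s_hom (G:=H)).
Definition FP : Group := obj H.

Lemma oa_act : IsAction (oa (X:=X)).
Proof.
  split; intros.
  - apply oa_z.
  - unfold oa at 1 2. rewrite oa_idn, eD, (act_add (xa X)). reflexivity.
  - unfold oa. rewrite eD, (actD (xa X)), sD. reflexivity.
Qed.

Definition Flam (l : FL) : FM := t (proj1_sig l).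
Lemma Flam'_pf (l : FL) : s' (d1 (proj1_sig l)) = gzero.
Proof. rewrite d1s, (proj2_sig l). apply d0_0. Qed.
Definition Flam' (l : FL) : FN := exist _ _ (Flam'_pf l).
Definition Fmu (m : FM) : FP := d0 m.
Definition Fnu (n : FN) : FP := t' (proj1_sig n).
Lemma FaL_pf p (l : FL) : s (act (e' p) (proj1_sig l)) = gzero.
Proof. rewrite oa_src, (proj2_sig l). apply oa_0. Qed.
Definition FaL (p : FP) (l : FL) : FL := exist _ _ (FaL_pf p l).
Definition FaM (p : FP) (m : FM) : FM := oa p m.
Lemma FaN_pf p (n : FN) : s' (e' p + proj1_sig n - e' p) = gzero.
Proof. rewrite !sD, sN, se, (proj2_sig n). gsimpl. reflexivity. Qed.
Definition FaN (p : FP) (n : FN) : FN := exist _ _ (FaN_pf p n).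
Lemma Fh_pf (m : FM) (n : FN) : s (e m - act (proj1_sig n) (e m)) = gzero.
Proof. rewrite sD, sN, oa_src, (proj2_sig n), se, oa_z. apply gNr. Qed.
Definition Fh (m : FM) (n : FN) : FL := exist _ _ (Fh_pf m n).

Ltac sg := apply sig_eq; simpl.

Lemma F_isxsq : IsXSq Flam Flam' Fmu Fnu FaL FaM FaN Fh.
Proof.
  assert (ha := xa X).
  assert (aLact : IsAction FaL).
  { split; intros; sg.
    - rewrite e0; apply (act_z ha).
    - rewrite eD; apply (act_add ha).
    - apply (act_hom ha). }
  assert (aNact : IsAction FaN).
  { split; intros; sg.
    - rewrite e0; gsimpl; reflexivity.
    - rewrite eD; gsimpl; reflexivity.
    - gsimpl; reflexivity. }
  assert (homlam : GpHom Flam). { intros x y; apply tD. }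
  assert (homlam' : GpHom Flam'). { intros x y; sg; apply d1D. }
  assert (hommu : GpHom Fmu). { intros x y; apply d0D. }
  assert (homnu : GpHom Fnu). { intros x y; apply tD. }
  split; auto.
  - intro l; apply d1t.
  - exact oa_act.
  - intros p l; unfold Flam, FaM; simpl. rewrite oa_tgt, te; reflexivity.
  - intros p l; sg. apply (@xd_equiv X).
  - split; auto. exact oa_act.
    + intros p m; unfold Fmu, FaM. apply (e_inj (G:=H)).
      rewrite <- d1e, oa_idn, (@xd_equiv X), d1e, !eD, eN. reflexivity.
    + intros m m'; unfold Fmu, FaM, oa. rewrite act_e_d0, !sD, sN, !se. reflexivity.
  - split; auto.
    + intros p n; unfold Fnu; simpl. rewrite !tD, tN, te. reflexivity.
    + intros n n'; sg. apply ker_peiffer. apply (proj2_sig n). apply (proj2_sig n').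
  - split; auto.
    + intros x y; change (Fmu (Flam (x + y)) = Fmu (Flam x) + Fmu (Flam y)). rewrite homlam. apply hommu.
    + intros p l; unfold Fmu, Flam; simpl. rewrite <- !d1t, (@xd_equiv X), !tD, tN, te. reflexivity.
    + intros l l'; sg. unfold Fmu, Flam. rewrite <- d1t, <- act_ker_s by apply (proj2_sig l').
      apply (@xd_peiffer X).
  - intros m n; unfold Flam, FaM, Fnu; simpl. rewrite tD, tN, te, oa_tgt, te, (actN oa_act). reflexivity.
  - intros m n; sg. unfold Fmu. rewrite d1D, d1N, (@xd_equiv X), d1e. gsimpl. reflexivity.
  - intros l n; sg. unfold Fnu, Flam. destruct l as [l Hl]; destruct n as [n Hn]; simpl.
    rewrite <- (@act_ker_s X n) by (rewrite sN, Hl; apply gN0).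
    assert (Hy : act n (- l + e (t l)) = - l + e (t l)).
    { rewrite act_ker_t, Hn, e0. apply (act_z ha). rewrite tD, tN, te. apply gNl. }
    rewrite (actD ha) in Hy. apply gmove_l in Hy. rewrite Hy. gsimpl. reflexivity.
  - intros m l; sg. unfold Flam', Fmu. rewrite act_e_d0, (@xd_peiffer X). gsimpl. reflexivity.
  - intros m m' n; sg. unfold Fmu. rewrite eD, (actD ha), act_e_d0. gsimpl. reflexivity.
  - intros m n n'; sg. unfold Fnu.
    rewrite <- act_ker_s by apply (Fh_pf m n').
    rewrite (act_add ha), (actD ha), (actN ha). gsimpl. reflexivity.
  - intros p m n; sg. unfold FaM. rewrite oa_idn, !(act_add ha), (actNK ha), (actD ha), (actN ha).
    reflexivity.
Qed.

Definition FSq : XSq := {| sqL := FL; sqM := FM; sqN := FN; sqP := FP;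
  sq_lam := Flam; sq_lam' := Flam'; sq_mu := Fmu; sq_nu := Fnu;
  sq_aL := FaL; sq_aM := FaM; sq_aN := FaN; sq_h := Fh; sq_ax := F_isxsq |}.
End ToSq.

Open Scope g_scope.

Lemma prod_gpgd (G H : GpGd) addA addO :
  IsHom addA addO (@prod_src G H) -> IsHom addA addO (@prod_tgt G H) ->
  IsHom addO addA (@prod_idn G H) ->
  (forall a b a1 b1, prod_tgt a = prod_src b -> prod_tgt a1 = prod_src b1 ->
     prod_comp (addA b b1) (addA a a1) = addA (prod_comp b a) (prod_comp b1 a1)) ->
  IsGpGd addA addO (@prod_src G H) (@prod_tgt G H) (@prod_idn G H) (@prod_comp G H).
Proof.
  intros Hs Ht He Hc. pose proof (gpgd_ax G) as AG; pose proof (gpgd_ax H) as AH.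
  unfold prod_src, prod_tgt, prod_idn, prod_comp in *.
  split; auto; intros.
  - destruct x; simpl; rewrite !se; reflexivity.
  - destruct x; simpl; rewrite !te; reflexivity.
  - injection H0; intros; simpl; rewrite !(gg_s_comp AG), !(gg_s_comp AH); auto.
  - injection H0; intros; simpl; rewrite !(gg_t_comp AG), !(gg_t_comp AH); auto.
  - destruct a; simpl; rewrite (gg_id_l AG), (gg_id_l AH); reflexivity.
  - destruct a; simpl; rewrite (gg_id_r AG), (gg_id_r AH); reflexivity.
  - injection H0; injection H1; intros; simpl; rewrite (gg_assoc AG), (gg_assoc AH); auto.
  - destruct a as [a b]. destruct (gg_inv AG a) as [a' [? [? [? ?]]]].
    destruct (gg_inv AH b) as [b' [? [? [? ?]]]].
    exists (a', b'); simpl. repeat split; f_equal; auto.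
Qed.

Section FromSq.
Variable S : XSq.
Notation L := (sqL S). Notation M := (sqM S). Notation N := (sqN S). Notation P := (sqP S).
Notation lam := (sq_lam S). Notation lam' := (sq_lam' S). Notation mu := (sq_mu S).
Notation nu := (sq_nu S). Notation aL := (sq_aL S). Notation aM := (sq_aM S).
Notation aN := (sq_aN S). Notation h := (sq_h S).
Let ax := sq_ax S.
Let haL := sq_actL ax. Let haM := sq_actM ax. Let haN := sq_actN ax.
Let hlam := sq_hom_lam ax. Let hlam' := sq_hom_lam' ax.
Let hmu := sq_hom_mu ax. Let hnu := sq_hom_nu ax.

Lemma h_m0 m : h m gzero = gzero.
Proof.
  assert (E := cs4_r ax m gzero gzero). rewrite g0l, (hom0 hnu), (act_z haL) in E.
  symmetry. apply (gaddI (x := h m gzero)). rewrite g0r. exact E.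
Qed.
Lemma h_0n n : h gzero n = gzero.
Proof.
  assert (E := cs4_l ax gzero gzero n). rewrite g0l, (hom0 hmu), (act_z haL) in E.
  symmetry. apply (gaddIr (x := h gzero n)). rewrite g0l. exact E.
Qed.
Lemma mu_eq p m : mu (aM p m) = p + mu m - p. Proof. apply (xmg_equiv (cs1_mu ax)). Qed.
Lemma mu_pf m m' : aM (mu m) m' = m + m' - m. Proof. apply (xmg_peiffer (cs1_mu ax)). Qed.
Lemma nu_eq p n : nu (aN p n) = p + nu n - p. Proof. apply (xmg_equiv (cs1_nu ax)). Qed.
Lemma nu_pf n n' : aN (nu n) n' = n + n' - n. Proof. apply (xmg_peiffer (cs1_nu ax)). Qed.
Lemma ml_pf l l' : aL (mu (lam l)) l' = l + l' - l. Proof. apply (xmg_peiffer (cs1_mulam ax)). Qed.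

Definition aLM (m : M) (l : L) : L := aL (mu m) l.
Lemma xm_LM : IsXModGp lam aLM.
Proof.
  unfold aLM; split.
  - split; intros. rewrite (hom0 hmu); apply (act_z haL).
    rewrite hmu; apply (act_add haL). apply (act_hom haL).
  - exact hlam.
  - intros m l. rewrite (cs1_lam ax), mu_pf. reflexivity.
  - intros l l'. apply ml_pf.
Qed.
Definition GG : GpGd := XGG xm_LM.
Definition HH : GpGd := XGG (cs1_nu ax).

Definition Gact (b : arr HH) (a : arr GG) : arr GG :=
  (aL (nu (fst b) + snd b) (fst a) - h (aM (snd b) (snd a)) (fst b), aM (snd b) (snd a)).

Lemma Gact_action : IsAction Gact.
Proof.
  split.
  - intros [l m]; unfold Gact; simpl. rewrite (hom0 hnu), g0l, (act_z haL), (act_z haM), h_m0. gsimpl. reflexivity.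
  - intros [n p] [n' p'] [l m]; unfold Gact; simpl. unfold sdadd; simpl. f_equal.
    + rewrite hnu, nu_eq, (cs4_r ax), (act_add haM), (cs5 ax). gsimpl.
      rewrite (actD haL), !(actN haL), !(actA haL). gsimpl. reflexivity.
    + apply (act_add haM).
  - intros [n p] [l m] [l' m']; unfold Gact; simpl; unfold sdadd; simpl. f_equal.
    2: apply (act_hom haM).
    unfold aLM. rewrite (act_hom haM), (cs4_l ax), !(actD haL), !(actN haL), !(actA haL). gsimpl.
    apply f_equal. set (k := h (aM p m) n).
    assert (key : aL (nu n + (p + mu m)) l' - k = - k + aL (mu (aM p m) + (nu n + p)) l').
    { apply (gaddI (x := k)). rewrite gA, <- ml_pf, (actA haL). f_equal.
      unfold k. rewrite (cs2_l ax), hmu, (actN haM), (homN hmu), !mu_eq. gsimpl. reflexivity. }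
    rewrite gA, key. gsimpl. reflexivity.
Qed.

Lemma h_add_r x n1 n2 : h x (n2 + n1) = h x n1 + h (aM (nu n1) x) n2.
Proof.
  replace (n2 + n1) with (n1 + aN (nu (- n1)) n2).
  - rewrite (cs4_r ax). f_equal. rewrite <- (cs5 ax), (actA haN), <- hnu, gNr, (hom0 hnu), (act_z haN).
    reflexivity.
  - rewrite nu_pf. gsimpl. reflexivity.
Qed.

Lemma h_lam_add u w n : h (lam u + w) n = u + h w n + aL (nu n) (- u).
Proof. rewrite (cs4_l ax), ml_pf, (cs3_l ax). gsimpl. reflexivity. Qed.

Definition addO := @sdadd M P aM.

Lemma G_thom : IsHom (sd_add Gact) addO (@prod_tgt GG HH).
Proof.
  intros [[l m] [n p]] [[l1 m1] [n1 p1]]. unfold prod_tgt, sd_add, Gact, addO, sdadd; simpl.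
  unfold xg_tgt, sdadd; simpl. unfold aLM. f_equal.
  - rewrite hlam, (cs1_lam ax), mu_pf, hlam, (homN hlam), (cs1_lam ax), (cs2_l ax).
    rewrite (actD haM). gsimpl. rewrite !(actN haM), !(actA haM). gsimpl. reflexivity.
  - rewrite hnu, nu_eq. gsimpl. reflexivity.
Qed.

Lemma G_ehom : IsHom addO (sd_add Gact) (@prod_idn GG HH).
Proof.
  intros [m p] [m1 p1]. unfold prod_idn, sd_add, Gact, addO, sdadd; simpl.
  unfold xg_idn, sdadd; simpl. unfold aLM.
  rewrite h_m0; repeat rewrite ?(act0 haL), ?(act0 haN), ?gN0, ?g0l. reflexivity.
Qed.

Lemma G_chom a b a1 b1 : prod_tgt a = prod_src b -> prod_tgt a1 = prod_src b1 ->
  @prod_comp GG HH (sd_add Gact b b1) (sd_add Gact a a1) =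
  sd_add Gact (prod_comp b a) (prod_comp b1 a1).
Proof.
  destruct a as [[l1 m1] [n1 p1]], b as [[l2 m2] [n2 p2]], a1 as [[l1' m1'] [n1' p1']],
    b1 as [[l2' m2'] [n2' p2']].
  unfold prod_tgt, prod_src, prod_comp, sd_add; simpl.
  unfold xg_tgt, xg_src, xg_comp, Gact; simpl. unfold sdadd; simpl.
  intros E1 E2; injection E1; injection E2; intros; subst. unfold aLM.
  f_equal; [f_equal | f_equal].
  - rewrite hmu, (act_add haL (mu (lam l1)) (mu m1)), ml_pf. gsimpl.
    apply f_equal; apply f_equal. rewrite <- (actD haL). apply f_equal.
    rewrite (act_hom haM), <- (cs1_lam ax), (act_add haM (nu n1) p1 m1'), h_lam_add, h_add_r, hnu.
    rewrite !(actD haL), !(actN haL), !(actA haL). gsimpl. reflexivity.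
  - rewrite (act_add haN), nu_pf, (actD haN). gsimpl. reflexivity.
Qed.

End FromSq.

Section FromSq2.
Variable S : XSq.
Notation L := (sqL S). Notation M := (sqM S). Notation N := (sqN S). Notation P := (sqP S).
Notation lam := (sq_lam S). Notation lam' := (sq_lam' S). Notation mu := (sq_mu S).
Notation nu := (sq_nu S). Notation aL := (sq_aL S). Notation aM := (sq_aM S).
Notation aN := (sq_aN S). Notation h := (sq_h S).
Let ax := sq_ax S.
Let haL := sq_actL ax. Let haM := sq_actM ax. Let haN := sq_actN ax.
Let hlam := sq_hom_lam ax. Let hlam' := sq_hom_lam' ax.
Let hmu := sq_hom_mu ax. Let hnu := sq_hom_nu ax.

Lemma G_shom : IsHom (sd_add (Gact (S:=S))) (@addO S) (@prod_src (GG S) (HH S)).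
Proof. intros [[l m] [n p]] [[l1 m1] [n1 p1]]. reflexivity. Qed.

Lemma G_der : IsDerivedAction (Gact (S:=S)).
Proof.
  split. apply Gact_action.
  exists (@addO S), (@sdzero M P), (@sdneg M P aM). split. exact (sd_group haM).
  split. exact (sd_group (@Gact_action S)).
  apply prod_gpgd. apply G_shom. apply G_thom. apply G_ehom. apply G_chom.
Qed.

Definition Gd1 (a : arr (GG S)) : arr (HH S) := (lam' (fst a), mu (snd a)).
Lemma Gd_mor : IsGpGdMor (G := GG S) (H := HH S) Gd1 mu.
Proof.
  split.
  - intros [l m] [l' m']; unfold Gd1; simpl; unfold sdadd; simpl; unfold aLM.
    rewrite hlam', (cs1_lam' ax), hmu. reflexivity.
  - exact hmu.
  - intros [l m]; reflexivity.
  - intros [l m]; unfold Gd1; simpl; unfold xg_tgt; simpl. rewrite (sq_comm ax), hmu. reflexivity.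
  - intros x; unfold Gd1; simpl; unfold xg_idn. rewrite (hom0 hlam'). reflexivity.
  - intros [l1 m1] [l2 m2] _; unfold Gd1; simpl; unfold xg_comp; simpl. rewrite hlam'. reflexivity.
Qed.

Lemma Gd_equiv (b : arr (HH S)) (a : arr (GG S)) :
  Gd1 (Gact b a) = gadd (gadd b (Gd1 a)) (gneg b).
Proof.
  destruct b as [n p], a as [l m]. unfold Gd1, Gact; simpl. unfold sdadd, sdneg; simpl. f_equal.
  - rewrite hlam', (homN hlam'), (cs1_lam' ax), (cs2_r ax).
    rewrite (act_add haN (nu n) p), nu_pf, mu_eq, (actA haN), !(actN haN). gsimpl. reflexivity.
  - rewrite mu_eq. reflexivity.
Qed.

Lemma Gd_peiffer (a a1 : arr (GG S)) :
  Gact (Gd1 a) a1 = gadd (gadd a a1) (gneg a).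
Proof.
  destruct a as [l m], a1 as [l1 m1]. unfold Gd1, Gact; simpl. unfold sdadd, sdneg; simpl.
  unfold aLM. f_equal.
  - rewrite (sq_comm ax), (cs3_r ax), mu_pf.
    rewrite (act_add haL (mu (lam l)) (mu m)), ml_pf, (actA haL), <- !hmu, !(actN haL). gsimpl. reflexivity.
  - apply mu_pf.
Qed.

Definition GX : XModGG := {| xG := GG S; xH := HH S; xact := Gact (S:=S); xact_ax := G_der;
  xd1 := Gd1; xd0 := mu; xd_mor := Gd_mor; xd_equiv := Gd_equiv; xd_peiffer := Gd_peiffer |}.
End FromSq2.

Open Scope g_scope.

Ltac sg := apply sig_eq; simpl.

Section FMor.
Variables (X Y : XModGG) (f : XModMor X Y).
Let hf := mf_mor f. Let hg := mg_mor f.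
Lemma FmL_pf (l : FL X) : src (xG Y) (mf1 f (proj1_sig l)) = gzero.
Proof. rewrite (gm_src hf), (proj2_sig l). apply (hom0 (gm_hom0 hf)). Qed.
Lemma FmN_pf (n : FN X) : src (xH Y) (mg1 f (proj1_sig n)) = gzero.
Proof. rewrite (gm_src hg), (proj2_sig n). apply (hom0 (gm_hom0 hg)). Qed.
Definition FmL (l : FL X) : FL Y := exist _ _ (FmL_pf l).
Definition FmN (n : FN X) : FN Y := exist _ _ (FmN_pf n).

Definition Fmor : XSqMor (FSq X) (FSq Y).
Proof.
  refine (@Build_XSqMor (FSq X) (FSq Y) FmL (mf0 f) FmN (mg0 f) _ _ _ _ _ _ _ _ _ _ _ _); simpl.
  - intros x y; sg. apply (gm_hom1 hf).
  - apply (gm_hom0 hf).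
  - intros x y; sg. apply (gm_hom1 hg).
  - apply (gm_hom0 hg).
  - intros l; unfold Flam; simpl. symmetry; apply (gm_tgt hf).
  - intros l; sg. apply m_d1.
  - intros m; apply m_d0.
  - intros n; unfold Fnu; simpl. symmetry; apply (gm_tgt hg).
  - intros p l; sg. rewrite m_act, (gm_idn hg). reflexivity.
  - intros p m; unfold FaM, oa. rewrite <- (gm_src hf), m_act, (gm_idn hg), (gm_idn hf). reflexivity.
  - intros p n; sg. rewrite !(gm_hom1 hg), (homN (gm_hom1 hg)), (gm_idn hg). reflexivity.
  - intros m n; sg. rewrite (gm_hom1 hf), (homN (gm_hom1 hf)), m_act, (gm_idn hf). reflexivity.
Defined.
End FMor.

Section GMor.
Variables (S T : XSq) (g : XSqMor S T).
Definition Gmf1 (a : arr (GG S)) : arr (GG T) := (fL g (fst a), fM g (snd a)).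
Definition Gmg1 (b : arr (HH S)) : arr (HH T) := (fN g (fst b), fP g (snd b)).
Lemma Gmf_mor : IsGpGdMor (G := GG S) (H := GG T) Gmf1 (fM g).
Proof.
  split.
  - intros [l m] [l' m']; unfold Gmf1; simpl; unfold sdadd; simpl; unfold aLM.
    rewrite (fL_hom g), (f_aL g), (f_mu g), (fM_hom g). reflexivity.
  - apply (fM_hom g).
  - intros [l m]; reflexivity.
  - intros [l m]; unfold Gmf1; simpl; unfold xg_tgt; simpl. rewrite (fM_hom g), (f_lam g). reflexivity.
  - intros x; unfold Gmf1; simpl; unfold xg_idn. rewrite (hom0 (fL_hom g)). reflexivity.
  - intros [l1 m1] [l2 m2] _; unfold Gmf1; simpl; unfold xg_comp; simpl. rewrite (fL_hom g). reflexivity.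
Qed.
Lemma Gmg_mor : IsGpGdMor (G := HH S) (H := HH T) Gmg1 (fP g).
Proof.
  split.
  - intros [l m] [l' m']; unfold Gmg1; simpl; unfold sdadd; simpl.
    rewrite (fN_hom g), (f_aN g), (fP_hom g). reflexivity.
  - apply (fP_hom g).
  - intros [l m]; reflexivity.
  - intros [l m]; unfold Gmg1; simpl; unfold xg_tgt; simpl. rewrite (fP_hom g), (f_nu g). reflexivity.
  - intros x; unfold Gmg1; simpl; unfold xg_idn. rewrite (hom0 (fN_hom g)). reflexivity.
  - intros [l1 m1] [l2 m2] _; unfold Gmg1; simpl; unfold xg_comp; simpl. rewrite (fN_hom g). reflexivity.
Qed.
Definition Gmor : XModMor (GX S) (GX T).
Proof.
  refine (@Build_XModMor (GX S) (GX T) Gmf1 (fM g) Gmg1 (fP g) Gmf_mor Gmg_mor _ _ _); simpl.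
  - intros [l m]; unfold Gmg1, Gmf1, Gd1; simpl. rewrite (f_lam' g), (f_mu g). reflexivity.
  - intros m; apply (f_mu g).
  - intros [n p] [l m]; unfold Gmg1, Gmf1, Gact; simpl.
    rewrite (fL_hom g), (homN (fL_hom g)), (f_aL g), (fP_hom g), (f_nu g), (f_h g), (f_aM g).
    reflexivity.
Defined.
End GMor.

Open Scope g_scope.


Definition FF : Functor XMod_GpGd XSq_Gp.
Proof.
  refine (@Build_Functor XMod_GpGd XSq_Gp FSq (fun X Y f => Fmor f) _ _ _); simpl.
  - intros X Y f g [H1 [H2 [H3 H4]]]. unfold XSqMor_eq; simpl.
    repeat split; intros; try sg; auto.
  - intros X. unfold XSqMor_eq; simpl. repeat split; intros; try sg; auto.
  - intros X Y Z g f. unfold XSqMor_eq; simpl. repeat split; intros; try sg; auto.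
Defined.

Definition GF : Functor XSq_Gp XMod_GpGd.
Proof.
  refine (@Build_Functor XSq_Gp XMod_GpGd GX (fun S T g => Gmor g) _ _ _); simpl.
  - intros S T f g [H1 [H2 [H3 H4]]]. unfold XModMor_eq; simpl. unfold Gmf1, Gmg1.
    repeat split; intros; try rewrite H1, H2; try rewrite H3, H4; auto.
  - intros S. unfold XModMor_eq; simpl. unfold Gmf1, Gmg1.
    repeat split; intros; try (destruct a); try (destruct b); reflexivity.
  - intros S T U g f. unfold XModMor_eq; simpl. unfold Gmf1, Gmg1. repeat split; intros; reflexivity.
Defined.

Section Eta.
Variable X : XModGG.
Notation G := (xG X). Notation H := (xH X).
Notation act := (xact X). Notation d1 := (xd1 X). Notation d0 := (xd0 X).
Notation s := (src G). Notation t := (tgt G). Notation e := (idn G).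
Notation s' := (src H). Notation t' := (tgt H). Notation e' := (idn H).

Lemma kerpf (K : GpGd) (a : arr K) : src K (a - idn K (src K a)) = gzero.
Proof. rewrite sD, sN, se. apply gNr. Qed.
Definition kpart (K : GpGd) (a : arr K) : KerG (s_hom (G:=K)) := exist _ _ (kerpf a).

Definition eta1 (a : arr G) : arr (GG (FSq X)) := (kpart a, s a).
Definition eta1' (b : arr H) : arr (HH (FSq X)) := (kpart b, s' b).

Lemma kpart_mor (K : GpGd) (conj : obj K -> arr K -> arr K)
  (hc : forall x k, conj x k = idn K x + k - idn K x) (a b : arr K) :
  proj1_sig (kpart (a + b)) = proj1_sig (kpart a) + conj (src K a) (proj1_sig (kpart b)).
Proof. simpl. rewrite hc, !sD, eD. gsimpl. reflexivity. Qed.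

Lemma eta_mf : IsGpGdMor (G := G) (H := GG (FSq X)) eta1 (fun x => x).
Proof.
  split.
  - intros a b; unfold eta1; simpl; unfold sdadd; simpl. f_equal. 2: apply sD.
    sg. unfold aLM, Fmu. rewrite act_e_d0, !sD, eD. gsimpl. reflexivity.
  - intros x y; reflexivity.
  - intros a; reflexivity.
  - intros a; simpl; unfold xg_tgt, Flam; simpl. rewrite tD, tN, te. gsimpl. reflexivity.
  - intros x; unfold eta1; simpl; unfold xg_idn. rewrite se. f_equal. sg. rewrite se; apply gNr.
  - intros a b Hab; unfold eta1; simpl; unfold xg_comp; simpl. rewrite (gg_s_comp (gpgd_ax G)) by exact Hab.
    f_equal. sg. rewrite comp_formula by exact Hab. gsimpl. rewrite !sD, sN, se. gsimpl. reflexivity.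
Qed.
Lemma eta_mg : IsGpGdMor (G := H) (H := HH (FSq X)) eta1' (fun x => x).
Proof.
  split.
  - intros a b; unfold eta1'; simpl; unfold sdadd; simpl. f_equal. 2: apply sD.
    sg. unfold FaN. simpl. rewrite !sD, eD. gsimpl. reflexivity.
  - intros x y; reflexivity.
  - intros a; reflexivity.
  - intros a; simpl; unfold xg_tgt, Fnu; simpl. rewrite tD, tN, te. gsimpl. reflexivity.
  - intros x; unfold eta1'; simpl; unfold xg_idn. rewrite se. f_equal. sg. rewrite se; apply gNr.
  - intros a b Hab; unfold eta1'; simpl; unfold xg_comp; simpl. rewrite (gg_s_comp (gpgd_ax H)) by exact Hab.
    f_equal. sg. rewrite comp_formula by exact Hab. gsimpl. rewrite !sD, sN, se. gsimpl. reflexivity.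
Qed.

Definition eta : XModMor X (GX (FSq X)).
Proof.
  refine (@Build_XModMor X (GX (FSq X)) eta1 (fun x => x) eta1' (fun x => x) eta_mf eta_mg _ _ _); simpl.
  - intros a; unfold eta1, eta1', Gd1; simpl. rewrite d1s. f_equal. sg.
    rewrite d1D, d1N, d1e, d1s. reflexivity.
  - intros x; reflexivity.
  - intros b a; unfold eta1, eta1', Gact; simpl. unfold FaM. rewrite oa_src. f_equal. sg.
    unfold Fnu; simpl. rewrite oa_src, tD, tN, te. gsimpl.
    rewrite <- (@act_ker_s X b) by apply kerpf.
    rewrite oa_idn, (actA (xa X)). gsimpl. rewrite (actD (xa X)), (actN (xa X)). gsimpl. reflexivity.
Defined.

Definition eta'1 (u : arr (GG (FSq X))) : arr G := proj1_sig (fst u) + e (snd u).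
Definition eta'1' (u : arr (HH (FSq X))) : arr H := proj1_sig (fst u) + e' (snd u).

Lemma eta'_mf : IsGpGdMor (G := GG (FSq X)) (H := G) eta'1 (fun x => x).
Proof.
  split.
  - intros [l m] [l' m']; unfold eta'1; simpl; unfold aLM, Fmu. rewrite act_e_d0, eD. gsimpl. reflexivity.
  - intros x y; reflexivity.
  - intros [[l Hl] m]; unfold eta'1; simpl. rewrite sD, Hl, se. apply g0l.
  - intros [[l Hl] m]; unfold eta'1; simpl. rewrite tD, te. reflexivity.
  - intros x; unfold eta'1; simpl. apply g0l.
  - intros [[l1 H1] m1] [[l2 H2] m2] Hab; unfold eta'1; simpl in *. unfold xg_tgt, xg_src, Flam in Hab; simpl in Hab.
    rewrite comp_formula. rewrite sD, H2, se, g0l. gsimpl. reflexivity.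
    rewrite sD, H2, se, g0l, tD, te. exact Hab.
Qed.
Lemma eta'_mg : IsGpGdMor (G := HH (FSq X)) (H := H) eta'1' (fun x => x).
Proof.
  split.
  - intros [l m] [l' m']; unfold eta'1'; simpl; unfold FaN; simpl. rewrite eD. gsimpl. reflexivity.
  - intros x y; reflexivity.
  - intros [[l Hl] m]; unfold eta'1'; simpl. rewrite sD, Hl, se. apply g0l.
  - intros [[l Hl] m]; unfold eta'1'; simpl. rewrite tD, te. reflexivity.
  - intros x; unfold eta'1'; simpl. apply g0l.
  - intros [[l1 H1] m1] [[l2 H2] m2] Hab; unfold eta'1'; simpl in *. unfold xg_tgt, xg_src, Fnu in Hab; simpl in Hab.
    rewrite comp_formula. rewrite sD, H2, se, g0l. gsimpl. reflexivity.
    rewrite sD, H2, se, g0l, tD, te. exact Hab.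
Qed.

Definition eta' : XModMor (GX (FSq X)) X.
Proof.
  refine (@Build_XModMor (GX (FSq X)) X eta'1 (fun x => x) eta'1' (fun x => x) eta'_mf eta'_mg _ _ _); simpl.
  - intros [l m]; unfold eta'1, eta'1', Gd1; simpl. rewrite d1D, d1e. reflexivity.
  - intros x; reflexivity.
  - intros [[n Hn] p] [[l Hl] m]; unfold eta'1, eta'1', Gact; simpl. unfold FaM, Fnu. simpl.
    rewrite oa_idn. rewrite (actD (xa X)), (act_add (xa X)), eD.
    rewrite (@act_ker_s X n (xact X (e' p) l)) by (rewrite oa_src, Hl; apply oa_0).
    rewrite (actA (xa X) (e' (t' n)) (e' p) l), <- eD, (actA (xa X) n (e' p) (e m)). gsimpl. reflexivity.
Defined.
End Eta.

Section Eps.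
Variable S : XSq.
Notation L := (sqL S). Notation M := (sqM S). Notation N := (sqN S). Notation P := (sqP S).
Notation lam := (sq_lam S). Notation lam' := (sq_lam' S). Notation mu := (sq_mu S).
Notation nu := (sq_nu S). Notation aL := (sq_aL S). Notation aM := (sq_aM S).
Notation aN := (sq_aN S). Notation h := (sq_h S).
Let ax := sq_ax S.
Let haL := sq_actL ax. Let haM := sq_actM ax. Let haN := sq_actN ax.
Let hlam := sq_hom_lam ax. Let hlam' := sq_hom_lam' ax.
Let hmu := sq_hom_mu ax. Let hnu := sq_hom_nu ax.

Definition epsL (x : sqL (FSq (GX S))) : L := fst (proj1_sig x).
Definition epsN (x : sqN (FSq (GX S))) : N := fst (proj1_sig x).

Definition eps : XSqMor (FSq (GX S)) S.
Proof.
  refine (@Build_XSqMor (FSq (GX S)) S epsL (fun x => x) epsN (fun x => x) _ _ _ _ _ _ _ _ _ _ _ _);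
    unfold GpHom, IsHom; simpl.
  - intros [[l m] Hx] [[l' m'] Hy]; unfold epsL; simpl in *. unfold xg_src in *; simpl in *. subst.
    unfold aLM. rewrite (hom0 hmu), (act_z haL). reflexivity.
  - reflexivity.
  - intros [[l m] Hx] [[l' m'] Hy]; unfold epsN; simpl in *. unfold xg_src in *; simpl in *. subst.
    rewrite (act_z haN). reflexivity.
  - reflexivity.
  - intros [[l m] Hx]; unfold epsL, Flam; simpl in *. unfold xg_src, xg_tgt in *; simpl in *. subst. apply g0r.
  - intros [[l m] Hx]; reflexivity.
  - reflexivity.
  - intros [[l m] Hx]; unfold epsN, Fnu; simpl in *. unfold xg_src, xg_tgt in *; simpl in *. subst. apply g0r.
  - intros p [[l m] Hx]; unfold epsL; simpl in *. unfold xg_src in *; simpl in *. subst. unfold Gact; simpl.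
    rewrite (hom0 hnu), g0l, (act0 haM), h_m0, gN0, g0r. reflexivity.
  - intros p m; reflexivity.
  - intros p [[n q] Hx]; unfold epsN; simpl in *. unfold xg_src in *; simpl in *. subst. unfold sdadd, sdneg; simpl.
    rewrite gN0, !(act0 haN), g0l, !g0r. reflexivity.
  - intros m [[n q] Hx]; unfold epsL; simpl in *. unfold xg_src in *; simpl in *. subst. unfold Gact, sdadd, sdneg, aLM; simpl.
    unfold epsN; simpl. repeat rewrite ?g0l, ?g0r, ?(act0 haL), ?(act_z haM), ?gN0, ?gNN.
    rewrite (actA haL), <- hmu, gNr, (hom0 hmu), (act_z haL). reflexivity.
Defined.

Definition eps'L (l : L) : sqL (FSq (GX S)) := exist (fun x : L * M => snd x = gzero) (l, gzero) eq_refl.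
Definition eps'N (n : N) : sqN (FSq (GX S)) := exist (fun x : N * P => snd x = gzero) (n, gzero) eq_refl.

Definition eps' : XSqMor S (FSq (GX S)).
Proof.
  refine (@Build_XSqMor S (FSq (GX S)) eps'L (fun x => x) eps'N (fun x => x) _ _ _ _ _ _ _ _ _ _ _ _);
    unfold GpHom, IsHom; simpl; intros; try sg; unfold sdadd, sdneg, Gact, Gd1, aLM; simpl;
    repeat rewrite ?g0l, ?g0r, ?(act0 haL), ?(act0 haN), ?(act0 haM), ?(act_z haM), ?(act_z haL),
      ?(act_z haN), ?gN0, ?gNN, ?(hom0 hmu), ?(hom0 hnu), ?h_m0, ?gNr;
    try reflexivity.
  - unfold Flam; simpl; unfold xg_tgt; simpl. rewrite g0r. reflexivity.
  - unfold Fnu; simpl; unfold xg_tgt; simpl. rewrite g0r. reflexivity.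
  - rewrite (actA haL), <- hmu, gNr, (hom0 hmu), (act_z haL). reflexivity.
Defined.
End Eps.

Open Scope g_scope.


Theorem mainTheorem2 : CatEquivalence XMod_GpGd XSq_Gp.
Proof.
  exists FF, GF. split.
  - exists eta, eta'. split; [|split].
    + intros X; simpl; unfold XModMor_eq; simpl. unfold eta'1, eta'1', eta1, eta1'; simpl.
      repeat split; intros; gsimpl; reflexivity.
    + intros X; simpl; unfold XModMor_eq; simpl. unfold eta'1, eta'1', eta1, eta1'; simpl.
      repeat split; intros [[l Hl] m]; simpl; (f_equal; [sg|]); rewrite ?sD, Hl, se, g0l; gsimpl;
        reflexivity.
    + intros X Y f; simpl; unfold XModMor_eq; simpl. unfold Gmf1, Gmg1, eta1, eta1'; simpl.
      pose proof (mf_mor f) as hf; pose proof (mg_mor f) as hg.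
      repeat split; intros; try reflexivity; (f_equal; [sg|]);
        rewrite ?(gm_hom1 hf), ?(homN (gm_hom1 hf)), ?(gm_hom1 hg), ?(homN (gm_hom1 hg)),
          ?(gm_idn hf), ?(gm_idn hg), ?(gm_src hf), ?(gm_src hg); reflexivity.
  - exists eps, eps'. split; [|split].
    + intros S; simpl; unfold XSqMor_eq; simpl.
      repeat split; intros [[a b] Hx]; sg; simpl in Hx; unfold xg_src in Hx; simpl in Hx; subst; reflexivity.
    + intros S; simpl; unfold XSqMor_eq; simpl. repeat split; reflexivity.
    + intros S T g; simpl; unfold XSqMor_eq; simpl. repeat split; reflexivity.
Qed.
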